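(* Let $\mathcal{L}$ be the collection of lower subsets of $\Omega$ and $\mathcal{B}_{\mathcal{L}}=\mathcal{B}\cap\mathcal{L}$ the collection of beneficial lower subsets of $\Omega$ (definitions below). Then $\mathcal{L}$ and $\mathcal{B}_{\mathcal{L}}$ are quadratic algebras of subsets of $\Omega$, and $\widehat{\mu}$ is a $q$-measure on $\mathcal{B}_{\mathcal{L}}$ that extends $\mu$; that is, $\mathcal{C}\subseteq\mathcal{B}_{\mathcal{L}}$ and $\widehat{\mu}(A)=\mu(A)$ for all $A\in\mathcal{C}$.
   Context: For $n\ge 1$, an $n$-path is a string $\omega=\alpha_0\alpha_1\cdots\alpha_n$ with $\alpha_k\in\{0,1\}$ and $\alpha_0=0$; $\Omega_n$ is the set of $n$-paths. For $n$-paths $\omega=\alpha_0\cdots\alpha_n$, $\omega'=\alpha'_0\cdots\alpha'_n$ put $D^n(\omega,\omega')=2^{-n}\prod_{k=1}^n i^{|\alpha_k-\alpha_{k-1}|}\prod_{k=1}^n i^{-|\alpha'_k-\alpha'_{k-1}|}\,\delta_{\alpha_n\alpha'_n}$ ($i=\sqrt{-1}$), and for $A\subseteq\Omega_n$ let $\mu_n(A)=\sum_{\omega,\omega'\in A}D^n(\omega,\omega')$ (a nonnegative real). $\Omega$ is the set of infinite sequences $\alpha_0\alpha_1\alpha_2\cdots$ with $\alpha_k\in\{0,1\}$, $\alpha_0=0$. A cylinder set is a set of the form $\{\alpha_0\alpha_1\cdots\in\Omega:\alpha_0\cdots\alpha_n\in B\}$ for some $n$ and some $B\subseteq\Omega_n$;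 $\mathcal{C}$ denotes the algebra of cylinder sets, and $\mu$ on $\mathcal{C}$ is defined by $\mu(\{\alpha_0\alpha_1\cdots:\alpha_0\cdots\alpha_n\in B\})=\mu_n(B)$ (this is well defined). For $A\subseteq\Omega$ and $n\ge 0$, $A^{(n)}=\{\omega\in\Omega:\text{there is }\omega'\in A\text{ whose first } n+1 \text{ entries agree with those of }\omega\}$; this is a cylinder set. $A$ is a lower set if $A=\bigcap_n A^{(n)}$; $A$ is beneficial if $\lim_{n\to\infty}\mu(A^{(n)})$ exists and is finite, and then $\widehat{\mu}(A)=\lim_{n\to\infty}\mu(A^{(n)})$. $\mathcal{B}$ is the set of beneficial sets. A collection $Q$ of subsets of a set $S$ is a quadratic algebra if $\emptyset,S\in Q$ and whenever $A,B,C\in Q$ are mutually disjoint with $A\cup B,A\cup C,B\cup C\in Q$, then $A\cup B\cup C\in Q$. A $q$-measure on a quadratic algebra $Q$ is a map $\nu:Q\to[0,\infty)$ such that for all mutually disjoint $A,B,C\in Q$ with $A\cup B,A\cup C,B\cup C\in Q$: $\nu(A\cup B\cup C)=\nu(A\cup B)+\nu(A\cup C)+\nu(B\cup C)-\nu(A)-\nu(B)-\nu(C)$. *)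

(* Defs.v *)
From HB Require Import structures.
From mathcomp Require Import all_boot all_order all_algebra.
From mathcomp Require Import all_classical all_reals all_analysis.
From mathcomp Require Import complex.
Set Implicit Arguments. Unset Strict Implicit. Unset Printing Implicit Defensive.
Import Order.TTheory GRing.Theory Num.Theory numFieldNormedType.Exports.
Local Open Scope classical_set_scope.
Local Open Scope ring_scope.

(* Omega : infinite 0/1 sequences alpha_0 alpha_1 ... with alpha_0 = 0
   (0 = false, 1 = true). *)
Definition Omega := {a : nat -> bool | a 0%N = false}.

(* Candidate n-paths: strings alpha_0 ... alpha_n (functions on 'I_(n+1)). *)
Definition npath (n : nat) := {ffun 'I_n.+1 -> bool}.

Definition Omega_n (n : nat) : {set npath n} := [set w : npath n | w ord0 == false].

(* the entry alpha_k of an n-path, for k <= n (arbitrary value false beyond) *)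
Definition entry (n : nat) (w : npath n) (k : nat) : bool :=
  if insub k is Some i then w i else false.

Definition Dn (R : realType) (n : nat) (w w' : npath n) : R[i] :=
  ((2%:R : R[i]) ^- n)
  * (\prod_(1 <= k < n.+1) ('i%C ^+ `|(entry w k : nat)%:Z - (entry w k.-1 : nat)%:Z|%N))
  * (\prod_(1 <= k < n.+1) ('i%C ^+ `|(entry w' k : nat)%:Z - (entry w' k.-1 : nat)%:Z|%N)^-1)
  * ((w ord_max == w' ord_max)%:R).

(* mu_n(A) = sum_{w, w' in A} D^n(w, w') (complex valued; the paper notes it
   is a nonnegative real) *)
Definition mu_n (R : realType) (n : nat) (B : {set npath n}) : R[i] :=
  \sum_(w in B) \sum_(w' in B) Dn R w w'.

Definition prefix (n : nat) (x : Omega) : npath n := [ffun i : 'I_n.+1 => proj1_sig x i].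

Definition cyl (n : nat) (B : {set npath n}) : set Omega :=
  [set x | prefix n x \in B].

Definition is_cyl (A : set Omega) : Prop :=
  exists n (B : {set npath n}), B \subset Omega_n n /\ A = cyl B.

(* mu on C, via a chosen representation (well defined by the paper);
   value 0 outside C (irrelevant).  mu is the real number mu_n(B). *)
Definition mu (R : realType) (A : set Omega) : R :=
  match pselect (exists nB : {n : nat & {set npath n}},
                   projT2 nB \subset Omega_n (projT1 nB) /\ A = cyl (projT2 nB)) with
  | left h => complex.Re (mu_n R (projT2 (proj1_sig (cid h))))
  | right _ => 0
  end.

Definition trunc (A : set Omega) (n : nat) : set Omega :=
  [set x | exists2 y, A y & forall k, (k <= n)%N -> proj1_sig x k = proj1_sig y k].

Definition lower (A : set Omega) : Prop := A = \bigcap_n trunc A n.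

Definition beneficial (R : realType) (A : set Omega) : Prop :=
  cvgn (fun n => mu R (trunc A n)).

Definition mu_hat (R : realType) (A : set Omega) : R :=
  limn (fun n => mu R (trunc A n)).

Definition quadratic_algebra (S : Type) (Q : set (set S)) : Prop :=
  Q set0 /\ Q setT /\
  forall A B C, Q A -> Q B -> Q C ->
    A `&` B = set0 -> A `&` C = set0 -> B `&` C = set0 ->
    Q (A `|` B) -> Q (A `|` C) -> Q (B `|` C) -> Q (A `|` B `|` C).

Definition q_measure (R : realType) (S : Type) (Q : set (set S)) (nu : set S -> R) : Prop :=
  (forall A, Q A -> 0 <= nu A) /\
  forall A B C, Q A -> Q B -> Q C ->
    A `&` B = set0 -> A `&` C = set0 -> B `&` C = set0 ->
    Q (A `|` B) -> Q (A `|` C) -> Q (B `|` C) ->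
    nu (A `|` B `|` C) = nu (A `|` B) + nu (A `|` C) + nu (B `|` C)
                         - nu A - nu B - nu C.

(* Main.v *)
Require Import Defs.
From HB Require Import structures.
From mathcomp Require Import all_boot all_order all_algebra.
From mathcomp Require Import all_classical all_reals all_analysis.
From mathcomp Require Import complex.
From mathcomp Require Import ring.
Import Order.TTheory GRing.Theory Num.Theory numFieldNormedType.Exports.
Local Open Scope classical_set_scope.
Local Open Scope ring_scope.
Set Implicit Arguments. Unset Strict Implicit. Unset Printing Implicit Defensive.

Section Cplx.
Variable R : realType.
Local Notation C := (R[i]).

Lemma absz_bool (a b : bool) : `|(a : nat)%:Z - (b : nat)%:Z|%N = (a != b) :> nat.
Proof. by case: a; case: b. Qed.

Definition ph (n : nat) (w : npath n) : C :=
  \prod_(1 <= k < n.+1) ('i%C ^+ `|(entry w k : nat)%:Z - (entry w k.-1 : nat)%:Z|%N).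

Lemma invi : ('i%C : C)^-1 = - 'i%C.
Proof. apply: mulr1_eq. by rewrite mulrN -expr2 sqr_i opprK. Qed.

Lemma conji : ('i%C : C)^*%C = - 'i%C.
Proof. by apply/eqP; rewrite eq_complex /= ?oppr0 !eqxx. Qed.

Lemma Dn_ph n (w w' : npath n) :
  Dn R w w' = (2%:R : C) ^- n * ph w * (ph w')^*%C * (w ord_max == w' ord_max)%:R.
Proof.
rewrite /Dn /ph rmorph_prod; congr (_ * _ * _).
apply: eq_bigr => k _; rewrite rmorphXn -exprVn; congr (_ ^+ _); rewrite invi; apply/eqP; rewrite eq_complex /= ?oppr0 !eqxx //.
Qed.
End Cplx.


Lemma entry_ord n (w : npath n) (i : 'I_n.+1) : entry w i = w i.
Proof. by rewrite /entry valK. Qed.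

Lemma entry_lt n (w : npath n) k (lt : (k < n.+1)%N) : entry w k = w (Ordinal lt).
Proof. by rewrite -(entry_ord w (Ordinal lt)). Qed.

Definition join n (r : npath n) (a : bool) : npath n.+1 :=
  [ffun i : 'I_n.+2 => if (i < n.+1)%N then entry r i else a].

Definition restr n (w : npath n.+1) : npath n :=
  [ffun j : 'I_n.+1 => w (widen_ord (leqnSn _) j)].

Lemma restr_join n (r : npath n) a : restr (join r a) = r.
Proof. by apply/ffunP => j; rewrite !ffunE /= ltn_ord entry_ord. Qed.

Lemma join_restr n (w : npath n.+1) : join (restr w) (w ord_max) = w.
Proof.
apply/ffunP => i; rewrite ffunE; case: ifP => lt.
  by rewrite (entry_lt _ lt) ffunE; congr (w _); apply: val_inj.
congr (w _); apply: val_inj => /=; have := ltn_ord i; rewrite ltnS leq_eqVlt lt orbF.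
by move/eqP.
Qed.

Lemma entry_join_lt n (r : npath n) a k : (k < n.+1)%N -> entry (join r a) k = entry r k.
Proof. by move=> lt; rewrite (entry_lt _ (ltnW lt)) ffunE /= lt. Qed.

Lemma entry_join_n n (r : npath n) a : entry (join r a) n.+1 = a.
Proof. by rewrite (entry_lt _ (ltnSn n.+1)) ffunE /= ltnn. Qed.

Lemma entry_max n (r : npath n) : entry r n = r ord_max.
Proof. by rewrite (entry_lt _ (ltnSn n)); congr (r _); apply: val_inj. Qed.

Lemma ph_join (R : realType) n (r : npath n) a :
  ph R (join r a) = ph R r * 'i%C ^+ (a != r ord_max).
Proof.
rewrite /ph big_nat_recr //= entry_join_n entry_join_lt // entry_max absz_bool.
congr (_ * _); apply: eq_big_nat => k /andP [k1 kn].
rewrite !entry_join_lt //; apply: leq_ltn_trans kn; exact: leq_pred.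
Qed.

Lemma join_max n (r : npath n) a : join r a ord_max = a.
Proof. by rewrite ffunE /= ltnn. Qed.

Lemma conji' (R : realType) : ('i%C : R[i])^*%C = - 'i%C.
Proof. by apply/eqP; rewrite eq_complex /= ?oppr0 !eqxx. Qed.

Lemma sqi (R : realType) : ('i%C : R[i]) * 'i%C = -1.
Proof. by rewrite -expr2 sqr_i. Qed.

Lemma pt_join (R : realType) n (r r' : npath n) :
  \sum_(a : bool) \sum_(a' : bool) Dn R (join r a) (join r' a') = Dn R r r'.
Proof.
rewrite !big_bool !Dn_ph !ph_join !join_max !rmorphM !rmorphXn /=.
have hc : (Complex 0 (-1) : R[i]) = - 'i%C by apply/eqP; rewrite eq_complex /= ?oppr0 !eqxx.
have h2 : (2%:R : R[i]) ^- n.+1 = (2%:R) ^- n / 2%:R by rewrite exprSr invfM.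
rewrite hc h2; have hi := sqi R.
have n2 : (2%:R : R[i]) != 0 by rewrite pnatr_eq0.
case: (r ord_max); case: (r' ord_max) => /=; rewrite ?expr0 ?expr1 ?eqxx /=;
  field: hi.
all: by rewrite expf_neq0.
Qed.

Definition ext n (B : {set npath n}) : {set npath n.+1} := [set w | restr w \in B].

Lemma sum_ext (R : realType) n (B : {set npath n}) (F : npath n.+1 -> R[i]) :
  \sum_(w in ext B) F w = \sum_(r in B) \sum_(a : bool) F (join r a).
Proof.
rewrite (reindex (fun p : npath n * bool => join p.1 p.2)) /=; last first.
  exists (fun w => (restr w, w ord_max)) => [[r a] _|w _] /=.
    by rewrite restr_join join_max.
  exact: join_restr.
rewrite pair_big_dep /=; apply: eq_bigl => -[r a] /=.
by rewrite inE restr_join andbT.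
Qed.

Lemma mu_n_ext (R : realType) n (B : {set npath n}) : mu_n R (ext B) = mu_n R B.
Proof.
rewrite /mu_n sum_ext; apply: eq_bigr => r rB.
under eq_bigr => a _ do rewrite sum_ext.
rewrite exchange_big /=; apply: eq_bigr => r' _.
exact: pt_join.
Qed.

Lemma mu_n_ge0c (R : realType) n (B : {set npath n}) : 0 <= mu_n R B.
Proof.
pose f (e : bool) (w : npath n) := ph R w * (w ord_max == e)%:R.
pose c := (2%:R : R[i]) ^- n.
have pt : forall w w', Dn R w w' = \sum_(e : bool) c * (f e w * (f e w')^*%C).
  move=> w w'; rewrite Dn_ph big_bool /f !rmorphM /= !conjc_nat.
  by case: (w ord_max); case: (w' ord_max) => /=; rewrite ?mulr0 ?mulr1 ?addr0 ?add0r ?mul0r ?mulr0 ?mulrA.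
have -> : mu_n R B = \sum_(e : bool) c * ((\sum_(w in B) f e w) * (\sum_(w in B) f e w)^*%C).
  rewrite /mu_n; under eq_bigr => w _ do under eq_bigr => w' _ do rewrite pt.
  under eq_bigr => w _ do rewrite exchange_big.
  rewrite exchange_big; apply: eq_bigr => e _.
  rewrite rmorph_sum mulr_suml mulr_sumr; apply: eq_bigr => w _.
  by rewrite mulr_sumr mulr_sumr; apply: eq_bigr => w' _.
apply: sumr_ge0 => e _; apply: mulr_ge0; last exact: mulcJ_ge0.
by rewrite /c invr_ge0 exprn_ge0 // ler0n.
Qed.

Lemma mu_n_ge0 (R : realType) n (B : {set npath n}) : 0 <= complex.Re (mu_n R B).
Proof. by have := mu_n_ge0c R B; rewrite lecE => /andP [_ h]; exact: h. Qed.

Lemma prefix_ext n (w : npath n) : w \in Omega_n n -> exists x : Omega, Defs.prefix n x = w.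
Proof.
rewrite inE => /eqP w0.
have h0 : entry w 0 = false.
  by rewrite (entry_lt _ (ltn0Sn n)) -w0; congr (w _); apply: val_inj.
exists (exist _ (fun k => entry w k) h0); apply/ffunP => i.
by rewrite ffunE /= entry_ord.
Qed.

Lemma prefix_agree n (x y : Omega) :
  Defs.prefix n x = Defs.prefix n y <-> forall k, (k <= n)%N -> proj1_sig x k = proj1_sig y k.
Proof.
split.
  move=> e k kn; have := congr1 (fun f : npath n => f (Ordinal (kn : (k < n.+1)%N))) e.
  by rewrite !ffunE.
by move=> h; apply/ffunP => i; rewrite !ffunE; apply: h; rewrite -ltnS.
Qed.

Lemma prefix0 n (x : Omega) : Defs.prefix n x \in Omega_n n.
Proof. by rewrite inE ffunE /=; case: x => f /= ->. Qed.

Lemma cyl_inj n (B1 B2 : {set npath n}) :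
  B1 \subset Omega_n n -> B2 \subset Omega_n n -> cyl B1 = cyl B2 -> B1 = B2.
Proof.
move=> s1 s2 e; apply/setP => w.
case wO: (w \in Omega_n n); last first.
  by apply/idP/idP => h; [move/fintype.subsetP: s1 => /(_ w h) | move/fintype.subsetP: s2 => /(_ w h)];
    rewrite wO.
have [x <-] := prefix_ext wO.
have := congr1 (fun S : set Omega => S x) e; rewrite /cyl /= => h.
by apply/idP/idP => H; [rewrite -h | rewrite h].
Qed.

Lemma restr_prefix n (x : Omega) : restr (Defs.prefix n.+1 x) = Defs.prefix n x.
Proof. by apply/ffunP => j; rewrite !ffunE. Qed.

Lemma cyl_ext n (B : {set npath n}) : cyl (ext B) = cyl B.
Proof. by rewrite /cyl; apply/seteqP; split => x /=; rewrite inE restr_prefix. Qed.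

Lemma ext_sub n (B : {set npath n}) : B \subset Omega_n n -> ext B \subset Omega_n n.+1.
Proof.
move=> /fintype.subsetP s; apply/fintype.subsetP => w; rewrite !inE => /s; rewrite inE ffunE.
by have -> : widen_ord (leqnSn n.+1) ord0 = ord0 by apply: val_inj.
Qed.

Lemma consist_d (R : realType) n (B : {set npath n}) : B \subset Omega_n n ->
  forall d, exists B' : {set npath (n + d)},
    [/\ B' \subset Omega_n (n + d), cyl B' = cyl B & mu_n R B' = mu_n R B].
Proof.
move=> sB; elim=> [|d [B' [s e m]]].
  by rewrite addn0; exists B.
rewrite addnS; exists (ext B'); split.
- exact: ext_sub.
- by rewrite cyl_ext.
- by rewrite mu_n_ext.
Qed.

Lemma consist (R : realType) n (B : {set npath n}) m : B \subset Omega_n n -> (n <= m)%N ->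
  exists B' : {set npath m},
    [/\ B' \subset Omega_n m, cyl B' = cyl B & mu_n R B' = mu_n R B].
Proof.
move=> sB nm; have := consist_d R sB (m - n); by rewrite subnKC.
Qed.

Lemma mu_cyl (R : realType) n (B : {set npath n}) :
  B \subset Omega_n n -> mu R (cyl B) = complex.Re (mu_n R B).
Proof.
move=> sB; rewrite /mu; case: pselect => [h|h]; last first.
  by exfalso; apply: h; exists (existT _ n B).
case: (cid h) => -[m B'] /= [sB' e].
case: (leqP n m) => nm.
  have [B'' [s'' e'' m'']] := consist R sB nm.
  have : B'' = B' by apply: cyl_inj => //; rewrite e'' e.
  by move=> <-; rewrite m''.
have [B'' [s'' e'' m'']] := consist R sB' (ltnW nm).
have : B'' = B by apply: cyl_inj => //; rewrite e'' e.
by move=> <-; rewrite m''.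
Qed.

Lemma mu_ge0 (R : realType) (A : set Omega) : 0 <= mu R A.
Proof. by rewrite /mu; case: pselect => // h; apply: mu_n_ge0. Qed.

Lemma trunc_sub (A : set Omega) n : A `<=` trunc A n.
Proof. by move=> x Ax; exists x. Qed.

Lemma trunc_mono (A : set Omega) m n : (m <= n)%N -> trunc A n `<=` trunc A m.
Proof. by move=> mn x [y Ay h]; exists y => // k km; apply: h; apply: leq_trans mn. Qed.

Lemma trunc_U (A B : set Omega) n : trunc (A `|` B) n = trunc A n `|` trunc B n.
Proof.
apply/seteqP; split => x.
  by move=> [y [Ay|By] h]; [left|right]; exists y.
by move=> [[y Ay h]|[y By h]]; exists y => //; [left|right].
Qed.

Lemma trunc_closed (A : set Omega) n (x y : Omega) : trunc A n x ->
  (forall k, (k <= n)%N -> proj1_sig x k = proj1_sig y k) -> trunc A n y.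
Proof. by move=> [z Az h] e; exists z => // k kn; rewrite -e // h. Qed.

Lemma lowerP (A : set Omega) : lower A <-> (forall x, (forall n, trunc A n x) -> A x).
Proof.
split.
  by move=> E x h; rewrite E => n _; exact: h.
move=> H; apply/seteqP; split.
  by move=> x Ax n _; exact: trunc_sub.
by move=> x h; apply: H => n; exact: h.
Qed.

Definition TB (A : set Omega) n : {set npath n} :=
  [set p : npath n | (p \in Omega_n n) && `[< exists y, A y /\ Defs.prefix n y = p >]].

Lemma TB_sub A n : TB A n \subset Omega_n n.
Proof. by apply/fintype.subsetP => p; rewrite inE => /andP []. Qed.

Lemma trunc_cyl A n : trunc A n = cyl (TB A n).
Proof.
apply/seteqP; split => x /=.
  move=> [y Ay h]; rewrite /cyl /= inE prefix0 /=; apply/asboolP; exists y; split => //.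
  by apply/prefix_agree => k kn; rewrite h.
rewrite /cyl /= inE => /andP [_ /asboolP [y [Ay e]]]; exists y => //.
by move/prefix_agree: e => e k kn; rewrite e.
Qed.

Lemma cyl_trunc n (B : {set npath n}) m : B \subset Omega_n n -> (n <= m)%N ->
  trunc (cyl B) m = cyl B.
Proof.
move=> sB nm; apply/seteqP; split; last exact: trunc_sub.
move=> x [y yB h]; rewrite /cyl /=.
have -> : Defs.prefix n x = Defs.prefix n y.
  by apply/prefix_agree => k kn; apply: h; apply: leq_trans nm.
exact: yB.
Qed.

Lemma lowerU (A B : set Omega) : lower A -> lower B -> lower (A `|` B).
Proof.
move=> /lowerP hA /lowerP hB; apply/lowerP => x h.
have [allA|] := pselect (forall n, trunc A n x); first by left; apply: hA.
move=> /existsNP [n0 nA]; right; apply: hB => n.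
have := h (maxn n n0); rewrite trunc_U => -[tA|tB].
  by exfalso; apply: nA; apply: (trunc_mono (leq_maxr n n0)).
exact: (trunc_mono (leq_maxl n n0)).
Qed.

Lemma konig (D : nat -> set Omega) : (forall n, D n !=set0) ->
  (forall m n, (m <= n)%N -> D n `<=` D m) ->
  (forall n (x y : Omega), D n x -> (forall k, (k <= n)%N -> proj1_sig x k = proj1_sig y k) -> D n y) ->
  exists x, forall n, D n x.
Proof.
move=> ne mono clo.
pose P n (f : nat -> bool) := forall m, exists z : Omega, D m z /\ forall k, (k <= n)%N -> proj1_sig z k = f k.
pose upd (f : nat -> bool) j (b : bool) := fun k => if k == j then b else f k.
have step : forall n f, P n f -> ~ P n.+1 (upd f n.+1 false) -> P n.+1 (upd f n.+1 true).
  move=> n f Pf /existsNP [m0 H0] m.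
  have [z [Dz hz]] := Pf (maxn m m0).
  have agr : forall b, proj1_sig z n.+1 = b -> forall k, (k <= n.+1)%N -> proj1_sig z k = upd f n.+1 b k.
    move=> b zb k kn; rewrite /upd; case: eqP => [->//|ne'].
    by apply: hz; rewrite -ltnS ltn_neqAle kn andbT; apply/eqP.
  have [zb|zb] : proj1_sig z n.+1 = true \/ proj1_sig z n.+1 = false by case: (proj1_sig z n.+1); [left|right].
    exists z; split; [exact: (mono _ _ (leq_maxl m m0))|exact: agr].
  by exfalso; apply: H0; exists z; split; [exact: (mono _ _ (leq_maxr m m0))|exact: agr].
pose g := fix g n := match n with
  | 0 => fun _ => false
  | n'.+1 => if `[< P n'.+1 (upd (g n') n'.+1 false) >] then upd (g n') n'.+1 false
             else upd (g n') n'.+1 true end.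
have Pg : forall n, P n (g n).
  elim=> [|n IH].
    move=> m; have [z Dz] := ne m; exists z; split => // k; rewrite leqn0 => /eqP ->.
    exact: (proj2_sig z).
  rewrite /=; case: asboolP => // H; exact: step.
have gagr : forall n k, (k <= n)%N -> g n k = g k k.
  elim=> [|n IH] k; first by rewrite leqn0 => /eqP ->.
  rewrite leq_eqVlt => /orP [/eqP ->//|]; rewrite ltnS => kn.
  have kn' : (k == n.+1) = false by apply/negbTE; rewrite neq_ltn ltnS kn.
  by rewrite /= -(IH k kn); case: asboolP => _; rewrite /upd kn'.
exists (exist (fun a : nat -> bool => a 0%N = false) (fun k => g k k) erefl) => n.
have [z [Dz hz]] := Pg n n.
by apply: (clo n z) => // k kn; rewrite hz //= gagr.
Qed.

Lemma eventually_disj (A B : set Omega) : lower A -> lower B -> A `&` B = set0 ->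
  exists N, forall n, (N <= n)%N -> trunc A n `&` trunc B n = set0.
Proof.
move=> /lowerP hA /lowerP hB AB.
have [[N HN]|H] := pselect (exists N, trunc A N `&` trunc B N = set0).
  exists N => n Nn; apply/seteqP; split => // x [xA xB].
  have : (trunc A N `&` trunc B N) x by split; apply: (trunc_mono Nn).
  by rewrite HN.
exfalso.
have ne : forall n, (trunc A n `&` trunc B n) !=set0.
  move=> n; apply/set0P/eqP => E; apply: H; exists n; exact: E.
have [x hx] : exists x, forall n, (trunc A n `&` trunc B n) x.
  apply: (@konig (fun n => trunc A n `&` trunc B n)) => //.
  - by move=> m n mn y [ya yb]; split; apply: (trunc_mono mn).
  - by move=> n y z [ya yb] e; split; apply: (trunc_closed _ e).
have : (A `&` B) x by split; [apply: hA | apply: hB] => n; case: (hx n).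
by rewrite AB.
Qed.

Lemma mkdisj (T : finType) (X Y : {set T}) :
  (forall w, w \in X -> w \in Y -> False) -> @disjoint T (mem X) (mem Y).
Proof.
move=> h; rewrite -setI_eq0; apply/eqP/setP => w; rewrite !inE.
by apply/negP => /andP [a b]; exact: h w a b.
Qed.

Lemma sum_setU (R : realType) (T : finType) (X Y : {set T}) (F : T -> R[i]) :
  (forall w, w \in X -> w \in Y -> False) ->
  \sum_(i in X :|: Y) F i = \sum_(i in X) F i + \sum_(i in Y) F i.
Proof.
move=> h; rewrite -bigU; last exact: mkdisj.
by apply: eq_bigl => i; rewrite !inE.
Qed.

Definition G (R : realType) n (X Y : {set npath n}) : R[i] :=
  \sum_(w in X) \sum_(w' in Y) Dn R w w'.

Definition pdisj (T : finType) (X Y : {set T}) := forall w, w \in X -> w \in Y -> False.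

Lemma GUl (R : realType) n (X Y Z : {set npath n}) : pdisj X Y ->
  G R (X :|: Y) Z = G R X Z + G R Y Z.
Proof. by move=> h; rewrite /G sum_setU. Qed.

Lemma GUr (R : realType) n (X Y Z : {set npath n}) : pdisj X Y ->
  G R Z (X :|: Y) = G R Z X + G R Z Y.
Proof. by move=> h; rewrite /G -big_split /=; apply: eq_bigr => w _; rewrite sum_setU. Qed.

Lemma mu_n_U (R : realType) n (X Y : {set npath n}) : pdisj X Y ->
  mu_n R (X :|: Y) = mu_n R X + mu_n R Y + G R X Y + G R Y X.
Proof.
move=> h; rewrite /mu_n; have := GUl R (X :|: Y) h; rewrite /G => ->.
have := GUr R X h; have := GUr R Y h; rewrite /G => -> ->; ring.
Qed.

Lemma pdisjU (T : finType) (X Y Z : {set T}) : pdisj X Z -> pdisj Y Z -> pdisj (X :|: Y) Z.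
Proof. by move=> a b w; rewrite inE => /orP [/a|/b]. Qed.

Lemma mu_n_U3 (R : realType) n (X Y Z : {set npath n}) :
  pdisj X Y -> pdisj X Z -> pdisj Y Z ->
  mu_n R (X :|: Y :|: Z) = mu_n R (X :|: Y) + mu_n R (X :|: Z) + mu_n R (Y :|: Z)
    - mu_n R X - mu_n R Y - mu_n R Z.
Proof.
move=> xy xz yz.
have zx : pdisj Z X by move=> w a b; exact: xz w b a.
have zy : pdisj Z Y by move=> w a b; exact: yz w b a.
rewrite (mu_n_U _ (pdisjU xz yz)) (GUl _ _ xy) (GUr _ _ xy).
rewrite (mu_n_U _ xz) (mu_n_U _ yz); ring.
Qed.

Lemma cyl_setU n (X Y : {set npath n}) : cyl (X :|: Y) = cyl X `|` cyl Y.
Proof.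
apply/seteqP; split => x; rewrite /cyl /= inE.
  by case/orP; [left|right].
by case=> ->; rewrite ?orbT.
Qed.

Lemma disj_TB (A B : set Omega) n : trunc A n `&` trunc B n = set0 -> pdisj (TB A n) (TB B n).
Proof.
move=> E w wA wB.
have wO : w \in Omega_n n by move: wA; rewrite inE => /andP [].
have [x xw] := prefix_ext wO.
have : (trunc A n `&` trunc B n) x by rewrite !trunc_cyl /cyl /= xw.
by rewrite E.
Qed.

Lemma subU n (X Y : {set npath n}) : X \subset Omega_n n -> Y \subset Omega_n n ->
  X :|: Y \subset Omega_n n.
Proof. by move=> a b; rewrite finset.subUset a b. Qed.

Lemma Re_lin (R : realType) (a b c d e f : R[i]) :
  complex.Re (a + b + c - d - e - f) =
  complex.Re a + complex.Re b + complex.Re c - complex.Re d - complex.Re e - complex.Re f.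
Proof. by case: a; case: b; case: c; case: d; case: e; case: f => * /=. Qed.

Lemma mu_trunc3 (R : realType) (A B C : set Omega) n :
  trunc A n `&` trunc B n = set0 -> trunc A n `&` trunc C n = set0 ->
  trunc B n `&` trunc C n = set0 ->
  mu R (trunc (A `|` B `|` C) n) =
  mu R (trunc (A `|` B) n) + mu R (trunc (A `|` C) n) + mu R (trunc (B `|` C) n)
  - mu R (trunc A n) - mu R (trunc B n) - mu R (trunc C n).
Proof.
move=> /disj_TB ab /disj_TB ac /disj_TB bc.
rewrite !trunc_U !trunc_cyl -!cyl_setU.
have sA := TB_sub A n; have sB := TB_sub B n; have sC := TB_sub C n.
rewrite !mu_cyl ?subU //.
by rewrite mu_n_U3 // Re_lin.
Qed.

Lemma cyl_lower n (B : {set npath n}) : B \subset Omega_n n -> lower (cyl B).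
Proof. by move=> sB; apply/lowerP => x h; have := h n; rewrite cyl_trunc. Qed.

Lemma cyl_cvg (R : realType) n (B : {set npath n}) : B \subset Omega_n n ->
  (fun k => mu R (trunc (cyl B) k)) @ \oo --> mu R (cyl B).
Proof.
move=> sB; apply: cvg_near_cst; apply: filterS (nbhs_infty_ge n) => k nk.
by rewrite cyl_trunc.
Qed.

Lemma cyl_all (R : realType) n (B : {set npath n}) : B \subset Omega_n n ->
  (beneficial R (cyl B) /\ lower (cyl B)) /\ mu_hat R (cyl B) = mu R (cyl B).
Proof.
move=> sB; split; first split.
- exact: (cvgP _ (cyl_cvg sB)).
- exact: cyl_lower.
- apply: cvg_lim; [exact: Rhausdorff | exact: cyl_cvg].
Qed.

Lemma set0_cyl : (set0 : set Omega) = cyl (finset.set0 : {set npath 0}).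
Proof. by apply/seteqP; split => x //; rewrite /cyl /= inE. Qed.

Lemma setT_cyl : (setT : set Omega) = cyl (Omega_n 0).
Proof. by apply/seteqP; split => x //= _; exact: prefix0. Qed.

Lemma Omega_n_sub n : Omega_n n \subset Omega_n n.
Proof. exact: subxx. Qed.

Lemma set0_sub n : (finset.set0 : {set npath n}) \subset Omega_n n.
Proof. exact: finset.sub0set. Qed.

Lemma q3 (R : realType) (A B C : set Omega) : lower A -> lower B -> lower C ->
  A `&` B = set0 -> A `&` C = set0 -> B `&` C = set0 ->
  beneficial R A -> beneficial R B -> beneficial R C ->
  beneficial R (A `|` B) -> beneficial R (A `|` C) -> beneficial R (B `|` C) ->
  (fun n => mu R (trunc (A `|` B `|` C) n)) @ \oo -->
    (mu_hat R (A `|` B) + mu_hat R (A `|` C) + mu_hat R (B `|` C)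
     - mu_hat R A - mu_hat R B - mu_hat R C).
Proof.
move=> lA lB lC ab ac bc hA hB hC hAB hAC hBC.
have [N1 H1] := eventually_disj lA lB ab.
have [N2 H2] := eventually_disj lA lC ac.
have [N3 H3] := eventually_disj lB lC bc.
pose proof (cvgB (cvgB (cvgB (cvgD (cvgD hAB hAC) hBC) hA) hB) hC) as hc.
apply: cvg_trans _ hc; apply: near_eq_cvg.
apply: filterS (nbhs_infty_ge (N1 + N2 + N3)) => n hn /=.
rewrite mu_trunc3 //.
- apply: H1; apply: leq_trans hn; rewrite -addnA; exact: leq_addr.
- apply: H2; apply: leq_trans hn; rewrite addnAC; exact: leq_addl.
- apply: H3; apply: leq_trans hn; exact: leq_addl.
Qed.

Theorem theorem4p1 (R : realType) :
  quadratic_algebra lower /\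
  quadratic_algebra (fun A : set Omega => beneficial R A /\ lower A) /\
  q_measure (fun A : set Omega => beneficial R A /\ lower A) (mu_hat R) /\
  (forall A : set Omega, is_cyl A ->
     (beneficial R A /\ lower A) /\ mu_hat R A = mu R A).
Proof.
have c0 := cyl_all R (set0_sub 0); rewrite -set0_cyl in c0.
have cT := cyl_all R (Omega_n_sub 0); rewrite -setT_cyl in cT.
split; [|split; [|split]].
- split; [exact: c0.1.2 | split; [exact: cT.1.2|]].
  by move=> A B C lA lB lC *; apply: lowerU => //; apply: lowerU.
- split; [exact: c0.1 | split; [exact: cT.1|]].
  move=> A B C [bA lA] [bB lB] [bC lC] ab ac bc [bAB _] [bAC _] [bBC _]; split.
    exact: (cvgP _ (q3 lA lB lC ab ac bc bA bB bC bAB bAC bBC)).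
  by apply: lowerU => //; apply: lowerU.
- split.
    move=> A [bA _]; apply: limr_ge => //; apply: nearW => n; exact: mu_ge0.
  move=> A B C [bA lA] [bB lB] [bC lC] ab ac bc [bAB _] [bAC _] [bBC _].
  apply: cvg_lim; first exact: Rhausdorff.
  exact: (q3 lA lB lC ab ac bc bA bB bC bAB bAC bBC).
- by move=> A [n [B [sB ->]]]; exact: cyl_all.
Qed.
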